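(* Let $X$ be a $\delta$-hyperbolic metric space. Then $\mathrm{E}(X)$ is $\delta$-hyperbolic as well. If, in addition, $X$ is geodesic, then every point of $\mathrm{E}(X)$ is within distance $\delta$ of $\mathrm{e}(X)$; if $X$ is discretely geodesic, then every point of $\mathrm{E}(X)$ is within distance $\delta+\frac12$ of $\mathrm{e}(X)$.
   Context: $X$ is $\delta$-hyperbolic ($\delta\ge0$) if $d(w,x)+d(y,z)\le\max\{d(w,y)+d(x,z),\,d(x,y)+d(w,z)\}+\delta$ for all $w,x,y,z\in X$. For a metric space $(X,d)$ let $\Delta(X)=\{f\colon X\to\mathbb{R}: f(x)+f(y)\ge d(x,y)\ \forall x,y\}$ with the pointwise order, $\mathrm{E}(X)$ the set of its minimal elements, metrized by $\|f-g\|_\infty=\sup_x|f(x)-g(x)|$, and $\mathrm{e}\colon X\to\mathrm{E}(X)$, $\mathrm{e}(y)=d(\cdot,y)$ (an isometric embedding). $X$ is discretely geodesic if $d$ is integer valued and any $x,y$ are joined by an isometric embedding $\gamma\colon\{0,\dots,d(x,y)\}\to X$ with $\gamma(0)=x,\gamma(d(x,y))=y$. *)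

(* Defs.v *)
From HB Require Import structures.
From mathcomp Require Import all_boot all_order all_algebra.
From mathcomp Require Import all_classical all_reals.
Set Implicit Arguments. Unset Strict Implicit. Unset Printing Implicit Defensive.
Import Order.TTheory GRing.Theory Num.Theory.
Local Open Scope ring_scope.
Local Open Scope classical_set_scope.

Section Defs.
Context {R : realType} {X : Type}.

Definition is_metric (d : X -> X -> R) : Prop :=
  [/\ forall x, d x x = 0,
      forall x y, d x y = 0 -> x = y,
      forall x y, d x y = d y x &
      forall x y z, d x z <= d x y + d y z].

Definition hyperbolic (dl : R) (d : X -> X -> R) : Prop :=
  forall w x y z,
    d w x + d y z <= Num.max (d w y + d x z) (d x y + d w z) + dl.

Definition in_Delta (d : X -> X -> R) (f : X -> R) : Prop :=
  forall x y, d x y <= f x + f y.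

Definition in_E (d : X -> X -> R) (f : X -> R) : Prop :=
  in_Delta d f /\
  forall g, in_Delta d g -> (forall x, g x <= f x) -> g = f.

Definition supdist (f g : X -> R) : R :=
  sup [set `|f x - g x| | x in [set: X]].

Definition emb (d : X -> X -> R) (y : X) : X -> R := fun x => d x y.

Definition geodesic (d : X -> X -> R) : Prop :=
  forall x y, exists gam : R -> X,
    [/\ gam 0 = x, gam (d x y) = y &
        forall s t, 0 <= s <= d x y -> 0 <= t <= d x y ->
          d (gam s) (gam t) = `|s - t| ].

Definition discretely_geodesic (d : X -> X -> R) : Prop :=
  (forall x y, exists n : nat, d x y = n%:R) /\
  forall x y (n : nat), d x y = n%:R ->
    exists gam : nat -> X,
      [/\ gam 0%N = x, gam n = y &
          forall i j : nat, (i <= n)%N -> (j <= n)%N ->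
            d (gam i) (gam j) = `|i%:R - j%:R| ].
End Defs.

(* Main.v *)
Require Import Defs.
From HB Require Import structures.
From mathcomp Require Import all_boot all_order all_algebra.
From mathcomp Require Import all_classical all_reals.
From mathcomp Require Import lra.
Import Order.TTheory GRing.Theory Num.Theory.
Local Open Scope ring_scope.
Local Open Scope classical_set_scope.

Section S.
Variables (R : realType) (X : Type) (d : X -> X -> R).
Hypothesis dm : is_metric d.

Lemma dxx x : d x x = 0. Proof. by case: dm. Qed.
Lemma dsym x y : d x y = d y x. Proof. by case: dm. Qed.
Lemma dtri x y z : d x z <= d x y + d y z. Proof. by case: dm. Qed.

Lemma Delta_ge0 f x : in_Delta d f -> 0 <= f x.
Proof.
move=> H; have := H x x; rewrite dxx -mulr2n => h.
by rewrite -(pmulrn_lge0 _ (isT : (0 < 2)%N)).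
Qed.

Lemma E_approx f x e : in_E d f -> 0 < e -> exists y, f x + f y <= d x y + e.
Proof.
move=> [fD fmin] e0; apply: contrapT => H.
have H' y : d x y + e < f x + f y.
  by rewrite ltNge; apply/negP => h; apply: H; exists y.
pose g := fun z => if pselect (z = x) then f x - e / 2 else f z.
have gD : in_Delta d g.
  move=> z w; rewrite /g.
  case: (pselect (z = x)) => [zx|zx]; case: (pselect (w = x)) => [wx|wx].
  - subst z w => /=; have := H' x; rewrite dxx => h; lra.
  - subst z => /=; have := H' w => h; lra.
  - subst w => /=; have := H' z => h; rewrite dsym; lra.
  - exact: fD.
have gf : forall z, g z <= f z.
  move=> z; rewrite /g; case: pselect => [zx|//] /=; subst z; lra.
have := fmin g gD gf => /(congr1 (fun h => h x)); rewrite /g.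
case: pselect => //= _ h; lra.
Qed.

Lemma E_lip f x z : in_E d f -> f x <= d x z + f z.
Proof.
move=> hf; apply/ler_addgt0Pr => e e0.
have [y hy] := E_approx f x e hf e0.
have := dtri x z y; have := hf.1 y z; rewrite (dsym y z) => h1 h2; lra.
Qed.

Definition Sset (f g : X -> R) := [set `|f x - g x| | x in [set: X]].

Lemma sd_has f g (z0 : X) : in_E d f -> in_E d g -> has_sup (Sset f g).
Proof.
move=> hf hg; split; first by exists `|f z0 - g z0|; exists z0.
exists (f z0 + g z0) => r [x _ <-].
have := E_lip f x z0 hf; have := E_lip g x z0 hg.
have := hf.1 x z0; have := hg.1 x z0 => h1 h2 h3 h4.
rewrite ler_norml; apply/andP; split; lra.
Qed.

Lemma sd_lb f g (z0 : X) x y : in_E d f -> in_E d g ->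
  d x y - f x - g y <= supdist f g.
Proof.
move=> hf hg; have hs := sd_has f g z0 hf hg.
have hub : `|f x - g x| <= supdist f g by apply: (sup_upper_bound hs); exists x.
rewrite distrC in hub; apply: (le_trans _ hub); apply: (le_trans _ (ler_norm _)).
have := hg.1 x y; lra.
Qed.

Lemma sd_approx f g (z0 : X) e : in_E d f -> in_E d g -> 0 < e ->
  exists x y, supdist f g <= d x y - f x - g y + e.
Proof.
move=> hf hg e0; have hs := sd_has f g z0 hf hg.
have e2 : 0 < e / 2 by rewrite divr_gt0.
have [r [x _ <-] hr] := sup_adherent e2 hs.
rewrite -/(supdist f g) in hr.
case: (lerP (g x) (f x)) => hgf.
- rewrite ger0_norm ?subr_ge0 // in hr.
  have [y hy] := E_approx f x (e/2) hf e2.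
  exists y, x; rewrite dsym; lra.
- rewrite ltr0_norm ?subr_lt0 // in hr.
  have [y hy] := E_approx g x (e/2) hg e2.
  exists x, y; lra.
Qed.

Lemma sd_emb f x : in_E d f -> supdist f (emb d x) <= f x.
Proof.
move=> hf; apply: ge_sup; first by exists `|f x - d x x|; exists x.
move=> r [y _ <-]; rewrite /emb.
have := E_lip f y x hf; have := hf.1 y x => h1 h2.
rewrite ler_norml; apply/andP; split; lra.
Qed.

Lemma E_value f v c : in_E d f -> (forall z, d v z <= f z + c) -> f v <= c.
Proof.
move=> hf H; apply/ler_addgt0Pr => e e0.
have [z hz] := E_approx f v e hf e0; have := H z; lra.
Qed.
End S.

Lemma d_ge0 (R : realType) (X : Type) (d : X -> X -> R) : is_metric d ->
  forall x y, 0 <= d x y.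
Proof.
move=> dm x y; have := dtri _ _ _ dm x y x; rewrite dxx // (dsym _ _ _ dm y x) => h; lra.
Qed.

Theorem proposition1p3 (R : realType) (X : Type) (d : X -> X -> R) (dl : R) :
  inhabited X -> is_metric d -> 0 <= dl -> hyperbolic dl d ->
  [/\ (forall f g h k : X -> R, in_E d f -> in_E d g -> in_E d h -> in_E d k ->
         supdist f g + supdist h k <=
           Num.max (supdist f h + supdist g k) (supdist g h + supdist f k) + dl),
      (geodesic d -> forall f, in_E d f -> forall eps : R, 0 < eps ->
         exists x : X, supdist f (emb d x) <= dl + eps) &
      (discretely_geodesic d -> forall f, in_E d f -> forall eps : R, 0 < eps ->
         exists x : X, supdist f (emb d x) <= dl + 2^-1 + eps)].
Proof.
move=> [z0] dm dl0 hyp; split.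
- move=> f g h k hf hg hh hk; apply/ler_addgt0Pr => e e0.
  have e2 : 0 < e / 2 by rewrite divr_gt0.
  have [x [x' H1]] := sd_approx _ _ _ dm f g z0 (e/2) hf hg e2.
  have [y [y' H2]] := sd_approx _ _ _ dm h k z0 (e/2) hh hk e2.
  have := hyp x x' y y'.
  have := sd_lb _ _ _ dm f h z0 x y hf hh.
  have := sd_lb _ _ _ dm g k z0 x' y' hg hk.
  have := sd_lb _ _ _ dm g h z0 x' y hg hh.
  have := sd_lb _ _ _ dm f k z0 x y' hf hk.
  case: (leP (supdist f h + supdist g k) (supdist g h + supdist f k)) => ?;
  case: (leP (d x y + d x' y') (d x' y + d x y')) => ?; lra.
- move=> geo f hf e e0.
  have e2 : 0 < e / 2 by rewrite divr_gt0.
  set x := z0.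
  have [y hy] := E_approx _ _ _ dm f x (e/2) hf e2.
  have fx0 := Delta_ge0 _ _ _ dm f x hf.1.
  have fy0 := Delta_ge0 _ _ _ dm f y hf.1.
  have D0 := d_ge0 _ _ _ dm x y.
  pose s := Num.min (f x) (d x y).
  have [hs1 hs2 hs3 hs4] : [/\ 0 <= s, s <= d x y, f x - s <= e / 2 &
                               s + f y <= d x y + e / 2].
    by rewrite /s; case: (leP (f x) (d x y)) => ?; split; lra.
  have [gam [g0 gD gi]] := geo x y.
  exists (gam s).
  apply: (le_trans (sd_emb _ _ _ dm f (gam s) hf)).
  suff : f (gam s) <= dl + e / 2 by lra.
  apply: (E_value _ _ _ dm) => // z.
  have hvx : d (gam s) x = s.
    rewrite -{1}g0 gi; [by rewrite subr0 ger0_norm|apply/andP; split; lra|apply/andP; split; lra].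
  have hvy : d (gam s) y = d x y - s.
    rewrite -{1}gD gi; [by rewrite distrC ger0_norm // subr_ge0|apply/andP; split; lra|apply/andP; split; lra].
  have := hyp (gam s) z x y; rewrite hvx hvy.
  have := hf.1 z x; have := hf.1 z y.
  case: (leP (s + d z y) (d z x + (d x y - s))) => ?; lra.
- move=> [dint disc] f hf e e0.
  have e2 : 0 < e / 2 by rewrite divr_gt0.
  set x := z0.
  have [y hy] := E_approx _ _ _ dm f x (e/2) hf e2.
  have fx0 := Delta_ge0 _ _ _ dm f x hf.1.
  have fy0 := Delta_ge0 _ _ _ dm f y hf.1.
  have [n hn] := dint x y.
  have [k hk] : exists k : nat, Num.floor (f x + 2^-1) = k%:Z.
    exists `|Num.floor (f x + 2^-1)|%N; rewrite gez0_abs // floor_ge0; lra.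
  have hk1 : (k%:R : R) <= f x + 2^-1.
    have := floor_le (f x + 2^-1); by rewrite hk.
  have hk2 : f x + 2^-1 < k%:R + 1.
    have := floorD1_gt (f x + 2^-1); by rewrite hk intrD.
  pose i := minn n k.
  have iln : (i <= n)%N by rewrite geq_minl.
  have [hs3 hs4] : f x - i%:R <= 2^-1 + e / 2 /\ i%:R + f y <= n%:R + 2^-1 + e / 2.
    rewrite /i; case: (leqP n k) => hnk.
    - move: hnk; rewrite -(ler_nat R) => ?; split; rewrite -hn; lra.
    - split; rewrite -?hn; lra.
  have [gam [g0 gD gi]] := disc x y n hn.
  exists (gam i).
  apply: (le_trans (sd_emb _ _ _ dm f (gam i) hf)).
  suff : f (gam i) <= dl + 2^-1 + e / 2 by lra.
  apply: (E_value _ _ _ dm) => // z.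
  have hvx : d (gam i) x = i%:R.
    by rewrite -{1}g0 gi ?subr0 ?ger0_norm.
  have hvy : d (gam i) y = n%:R - i%:R.
    by rewrite -{1}gD gi // distrC ger0_norm // subr_ge0 ler_nat.
  have := hyp (gam i) z x y; rewrite hvx hvy hn.
  have := hf.1 z x; have := hf.1 z y.
  case: (leP (i%:R + d z y) (d z x + (n%:R - i%:R))) => ?; lra.
Qed.
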